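(* Let $n,m$ be positive integers and $\mathbf a,\mathbf b\in\mathbb N^n$ with $a_1+\cdots+a_i\ge b_1+\cdots+b_i$ for all $i$. There is a bijection between the set of plane partitions of skew shape $\theta(\mathbf a,\mathbf b)$ with all entries in $\{0,1,\dots,m\}$ and the set of integral points (integer-valued flows) of $\mathcal F_{G(n,m)}(\mathbf a,\mathbf b)$.
   Context: $\theta(\mathbf a,\mathbf b)=\lambda/\mu$ where $\lambda=(a_1+\cdots+a_n,\ldots,a_1+a_2,a_1)$ and $\mu=(b_1+\cdots+b_n,\ldots,b_1+b_2,b_1)$ (the dominance hypothesis ensures $\mu\subseteq\lambda$). A plane partition of skew shape $\lambda/\mu$ is a filling of the cells $(i,j)$, $\mu_i<j\le\lambda_i$, by nonnegative integers that weakly decrease along each row (left to right) and down each column. $G(n,m)$ is the directed graph with vertex set $\{(i,j):1\le i\le n,\ 0\le j\le m\}\cup\{s\}$ and edges $((i,j),(i,j+1))$ for $1\le i\le n$, $0\le j\le m-1$; $((i,j),(i+1,j))$ for $1\le i\le n-1$, $0\le j\le m$; and $((n,j),s)$ for $0\le j\le m$. $\mathcal F_{G(n,m)}(\mathbf a,\mathbf b)$ is the set of nonnegative real edge weightings $f$ such that at each vertex, outflow minus inflow equals its netflow: $a_i$ at $(i,0)$, $-b_i$ at $(i,m)$, $-\sum_i a_i+\sum_i b_i$ at $s$, and $0$ elsewhere. *)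

(* Defs.v *)
From mathcomp Require Import all_boot all_order all_algebra.
Set Implicit Arguments. Unset Strict Implicit. Unset Printing Implicit Defensive.

(* Conventions: a, b are sequences of naturals of length n; a_i (1-indexed)
   is [nth 0 a (i-1)].  [psum s k] = s_1 + ... + s_k. *)
Definition psum (s : seq nat) (k : nat) : nat := \sum_(i < k) nth 0 s i.

Definition lam (n : nat) (a : seq nat) (r : nat) : nat := psum a (n.+1 - r).
Definition mu (n : nat) (b : seq nat) (r : nat) : nat := psum b (n.+1 - r).

Definition in_shape (n : nat) (a b : seq nat) (r j : nat) : bool :=
  (1 <= r <= n) && (mu n b r < j <= lam n a r).

(* A plane partition of shape theta(a,b) with entries in {0..m}, encoded as a
   function on N x N that vanishes outside the shape (canonical encoding of a
   filling of the cells). *)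
Definition is_pp (n m : nat) (a b : seq nat) (p : nat -> nat -> nat) : Prop :=
  [/\ (forall r j, ~~ in_shape n a b r j -> p r j = 0),
      (forall r j, in_shape n a b r j -> p r j <= m),
      (forall r j j', in_shape n a b r j -> in_shape n a b r j' -> j <= j' ->
          p r j' <= p r j)
    & (forall r r' j, in_shape n a b r j -> in_shape n a b r' j -> r <= r' ->
          p r' j <= p r j)].

Definition PP (n m : nat) (a b : seq nat) := {p : nat -> nat -> nat | is_pp n m a b p}.

(* Vertices: [Some (i,j)] is (i,j) (1 <= i <= n, 0 <= j <= m); [None] is s. *)
Definition vert := option (nat * nat).
Definition edge := (vert * vert)%type.

Definition verts (n m : nat) : seq vert :=
  None :: [seq Some (i, j) | i <- iota 1 n, j <- iota 0 m.+1].

Definition edges (n m : nat) : seq edge :=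
  [seq (Some (i, j), Some (i, j.+1)) | i <- iota 1 n, j <- iota 0 m]
  ++ [seq (Some (i, j), Some (i.+1, j)) | i <- iota 1 n.-1, j <- iota 0 m.+1]
  ++ [seq (Some (n, j), None) | j <- iota 0 m.+1].

Definition netflow (n m : nat) (f : edge -> nat) (x : vert) : int :=
  (\sum_(e <- edges n m | e.1 == x) Posz (f e) - \sum_(e <- edges n m | e.2 == x) Posz (f e))%R.

Definition demand (n m : nat) (a b : seq nat) (x : vert) : int :=
  match x with
  | None => (- Posz (psum a n) + Posz (psum b n))%R
  | Some (i, j) =>
      if j == 0 then Posz (nth 0 a i.-1)
      else if j == m then (- Posz (nth 0 b i.-1))%R
      else 0%R
  end.

Definition is_int_flow (n m : nat) (a b : seq nat) (f : edge -> nat) : Prop :=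
  (forall e, e \notin edges n m -> f e = 0) /\
  (forall x, x \in verts n m -> netflow n m f x = demand n m a b x).

Definition IntFlow (n m : nat) (a b : seq nat) := {f : edge -> nat | is_int_flow n m a b f}.

(* Main.v *)
Require Import Defs.
From mathcomp Require Import all_boot all_order all_algebra.
From mathcomp Require Import zify.
From Stdlib Require Import FunctionalExtensionality ProofIrrelevance.
Set Implicit Arguments. Unset Strict Implicit. Unset Printing Implicit Defensive.
Import GRing.Theory.

Lemma sum1 (s : seq nat) x0 (G : nat -> int) : uniq s ->
  (\sum_(x <- s) (if x == x0 then G x else 0) = if x0 \in s then G x0 else 0)%R.
Proof.
elim: s => [|x s IH] /=; first by rewrite big_nil.
move=> /andP[xs us]; rewrite big_cons IH // in_cons.
case: (eqVneq x x0) => [<-|ne] /=.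
  by rewrite (negbTE xs) addr0.
by rewrite add0r.
Qed.

Lemma sum2 (s t : seq nat) x0 y0 (G : nat -> nat -> int) : uniq s -> uniq t ->
  (\sum_(x <- s) \sum_(y <- t) (if (x == x0) && (y == y0) then G x y else 0)
   = if (x0 \in s) && (y0 \in t) then G x0 y0 else 0)%R.
Proof.
move=> us ut.
rewrite (eq_bigr (fun x => if x == x0 then \sum_(y <- t) (if y == y0 then G x y else 0) else 0)%R).
  rewrite sum1 //; case: (x0 \in s) => //=; by rewrite sum1.
move=> x _; case: (x == x0) => //=; by rewrite big1.
Qed.

Lemma sum0 (T : eqType) (s : seq T) (G : T -> int) : (\sum_(x <- s) (if false then G x else 0) = 0)%R.
Proof. by rewrite big1. Qed.

Definition Hf (f : edge -> nat) i j := f (Some (i,j), Some (i,j.+1)).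
Definition Vf n (f : edge -> nat) i j :=
  if i < n then f (Some (i,j), Some (i.+1,j)) else f (Some (n,j), None).
Definition outF n m f i j := (if j < m then Hf f i j else 0) + Vf n f i j.
Definition inF n f i j := (if 0 < j then Hf f i j.-1 else 0) + (if 1 < i then Vf n f i.-1 j else 0).

Lemma bigAP (T U : Type) (s : seq T) (t : seq U) (h : T -> U -> edge) (P : pred edge) (F : edge -> int) :
  (\sum_(e <- [seq h x y | x <- s, y <- t] | P e) F e =
   \sum_(x <- s) \sum_(y <- t) (if P (h x y) then F (h x y) else 0))%R.
Proof. by rewrite big_mkcond big_allpairs_dep. Qed.

Lemma bigMP (T : Type) (s : seq T) (h : T -> edge) (P : pred edge) (F : edge -> int) :
  (\sum_(e <- [seq h x | x <- s] | P e) F e =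
   \sum_(x <- s) (if P (h x) then F (h x) else 0))%R.
Proof. by rewrite big_mkcond big_map. Qed.

Lemma eqS1 (x y i j : nat) (w : vert) : (((Some (x,y), w) : edge).1 == Some (i,j)) = (x == i) && (y == j).
Proof. by []. Qed.
Lemma eqS2 (x y i j : nat) (w : vert) : (((w, Some (x,y)) : edge).2 == Some (i,j)) = (x == i) && (y == j).
Proof. by []. Qed.

Lemma sum2c (s t : seq nat) x0 y0 (c : nat -> nat -> bool) (G : nat -> nat -> int) :
  uniq s -> uniq t -> (forall x y, c x y = (x == x0) && (y == y0)) ->
  (\sum_(x <- s) \sum_(y <- t) (if c x y then G x y else 0)
   = if (x0 \in s) && (y0 \in t) then G x0 y0 else 0)%R.
Proof.
move=> us ut hc; rewrite -sum2 //; apply: eq_bigr => x _; apply: eq_bigr => y _.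
by rewrite hc.
Qed.

Lemma sum1c (s : seq nat) x0 (c : nat -> bool) (G : nat -> int) :
  uniq s -> (forall x, c x = (x == x0)) ->
  (\sum_(x <- s) (if c x then G x else 0) = if x0 \in s then G x0 else 0)%R.
Proof.
move=> us hc; rewrite -sum1 //; apply: eq_bigr => x _.
by rewrite hc.
Qed.

Lemma sum0c (T : Type) (s : seq T) (c : T -> bool) (G : T -> int) :
  (forall x, c x = false) -> (\sum_(x <- s) (if c x then G x else 0) = 0)%R.
Proof. by move=> hc; rewrite big1 // => x _; rewrite hc. Qed.

Lemma sum20c (T U : Type) (s : seq T) (t : seq U) (c : T -> U -> bool) (G : T -> U -> int) :
  (forall x y, c x y = false) -> (\sum_(x <- s) \sum_(y <- t) (if c x y then G x y else 0) = 0)%R.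
Proof. by move=> hc; rewrite big1 // => x _; rewrite big1 // => y _; rewrite hc. Qed.

Lemma eqSP (x y i j : nat) : (Some (x,y) == Some (i,j) :> vert) = (x == i) && (y == j).
Proof. by []. Qed.

Lemma outsum n m (f : edge -> nat) i j : 0 < i <= n -> j <= m ->
  (\sum_(e <- edges n m | e.1 == Some (i,j)) Posz (f e) = Posz (outF n m f i j))%R.
Proof.
move=> Hi Hj.
rewrite /edges !big_cat !bigAP bigMP.
rewrite (sum2c (x0 := i) (y0 := j)) ?iota_uniq //.
rewrite (sum2c (x0 := i) (y0 := j)) ?iota_uniq //.
rewrite /outF /Vf /Hf !mem_iota.
have -> : (1 <= i < 1 + n) = true by lia.
have -> : (0 <= j < 0 + m.+1) = true by lia.
have -> : (0 <= j < 0 + m) = (j < m) by lia.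
have -> : (1 <= i < 1 + n.-1) = (i < n) by lia.
case: (ltnP i n) => Hin.
  rewrite sum0c; last by move=> x /=; rewrite eqSP; apply/negbTE; lia.
  case: (j < m); rewrite /= ?addr0 ?add0r //.
have ni : n = i by lia.
subst i.
rewrite (sum1c (x0 := j)) ?iota_uniq ?mem_iota //; last by move=> x /=; rewrite eqSP eqxx.
have -> : (0 <= j < 0 + m.+1) = true by lia.
case: (j < m); rewrite /= ?addr0 ?add0r //.
Qed.

Lemma insum n m (f : edge -> nat) i j : 0 < i <= n -> j <= m ->
  (\sum_(e <- edges n m | e.2 == Some (i,j)) Posz (f e) = Posz (inF n f i j))%R.
Proof.
move=> Hi Hj.
rewrite /edges !big_cat !bigAP bigMP.
rewrite (@sum0c nat (iota 0 m.+1) (fun x => ((Some (n, x), None) : edge).2 == Some (i, j))) //.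
rewrite /inF /Vf /Hf.
case: i Hi => [|i0] // Hi.
rewrite (@sum2c (iota 1 n.-1) (iota 0 m.+1) i0 j
   (fun x y => ((Some (x, y), Some (x.+1, y)) : edge).2 == Some (i0.+1, j))) ?iota_uniq //.
rewrite !mem_iota.
have -> : (0 <= j < 0 + m.+1) = true by lia.
have -> : (1 <= i0 < 1 + n.-1) = (1 < i0.+1) by lia.
have -> : i0.+1.-1 < n = true by lia.
case: j Hj => [|j0] Hj.
  rewrite (@sum20c nat nat (iota 1 n) (iota 0 m) (fun x y => ((Some (x, y), Some (x, y.+1)) : edge).2 == Some (i0.+1, 0))); last by move=> x y; rewrite /= eqSP andbF.
  by case: (1 < i0.+1); rewrite /= ?add0r ?addr0 ?add0n ?addn0.
rewrite (@sum2c (iota 1 n) (iota 0 m) i0.+1 j0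
   (fun x y => ((Some (x, y), Some (x, y.+1)) : edge).2 == Some (i0.+1, j0.+1))) ?iota_uniq //.
rewrite !mem_iota.
have -> : (1 <= i0.+1 < 1 + n) = true by lia.
have -> : (0 <= j0 < 0 + m) = true by lia.
  case: (1 < i0.+1); rewrite /= ?andbT ?add0r ?addr0 ?add0n ?addn0 ?PoszD //.
exact (fun _ => 0%R).
Qed.

Lemma netflowE n m (f : edge -> nat) i j : 0 < i <= n -> j <= m ->
  netflow n m f (Some (i,j)) = (Posz (outF n m f i j) - Posz (inF n f i j))%R.
Proof. by move=> Hi Hj; rewrite /netflow outsum // insum. Qed.

Lemma netflowN n m (f : edge -> nat) :
  netflow n m f None = (- \sum_(j <- iota 0 m.+1) Posz (f (Some (n,j), None)))%R.
Proof.
rewrite /netflow /edges !big_cat !bigAP bigMP.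
rewrite (@sum20c nat nat (iota 1 n) (iota 0 m) (fun x y => ((Some (x, y), Some (x, y.+1)) : edge).1 == None)) //.
rewrite (@sum20c nat nat (iota 1 n.-1) (iota 0 m.+1) (fun x y => ((Some (x, y), Some (x.+1, y)) : edge).1 == None)) //.
rewrite (@sum0c nat (iota 0 m.+1) (fun x => ((Some (n, x), None) : edge).1 == None)) //.
rewrite bigMP /=.
by rewrite !add0r.
all: try exact (fun _ => 0%R).
all: try exact (fun _ _ => 0%R).
Qed.

Lemma memH n m i j : 0 < i <= n -> j < m -> (Some (i,j), Some (i,j.+1)) \in edges n m.
Proof.
move=> Hi Hj; rewrite /edges !mem_cat; apply/orP; left.
by apply: (allpairs_f (fun i j => (Some (i,j), Some (i,j.+1)) : edge)); rewrite mem_iota; lia.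
Qed.

Lemma memV n m i j : 0 < i < n -> j <= m -> (Some (i,j), Some (i.+1,j)) \in edges n m.
Proof.
move=> Hi Hj; rewrite /edges !mem_cat; apply/orP; right; apply/orP; left.
by apply: (allpairs_f (fun i j => (Some (i,j), Some (i.+1,j)) : edge)); rewrite mem_iota; lia.
Qed.

Lemma memS n m j : j <= m -> (Some (n,j), None) \in edges n m.
Proof.
move=> Hj; rewrite /edges !mem_cat; apply/orP; right; apply/orP; right.
by apply/mapP; exists j => //; rewrite mem_iota; lia.
Qed.

Lemma edgesP n m e : 0 < n -> e \in edges n m ->
  (exists i j, e = (Some (i,j), Some (i,j.+1)) /\ 0 < i <= n /\ j < m) \/
  (exists i j, e = (Some (i,j), Some (i.+1,j)) /\ 0 < i < n /\ j <= m) \/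
  (exists j, e = (Some (n,j), None) /\ j <= m).
Proof.
move=> n0; rewrite /edges !mem_cat => /orP[|/orP[]].
- move/allpairsP => [[i j] [Hi Hj ->]]; left; exists i, j; split => //.
  by move: Hi Hj; rewrite !mem_iota /=; lia.
- move/allpairsP => [[i j] [Hi Hj ->]]; right; left; exists i, j; split => //.
  by move: Hi Hj; rewrite !mem_iota /=; lia.
- move/mapP => [j Hj ->]; right; right; exists j; split => //.
  by move: Hj; rewrite !mem_iota /=; lia.
Qed.

Lemma vertsP n m x : x \in verts n m ->
  x = None \/ exists i j, x = Some (i,j) /\ 0 < i <= n /\ j <= m.
Proof.
rewrite /verts in_cons => /orP[/eqP ->|]; first by left.
move/allpairsP => [[i j] [Hi Hj ->]]; right; exists i, j; split => //.
by move: Hi Hj; rewrite !mem_iota /=; lia.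
Qed.

Definition P (y : nat -> nat) (i : nat) : nat := \sum_(t < i) y t.
Definition NZ n m (Y : nat -> nat -> nat) k t := if (0 < k <= m) && (t < n) then Y k t else 0.
Definition Ext n m (a b : seq nat) Y k :=
  if k == 0 then nth 0 a else if k == m.+1 then nth 0 b else NZ n m Y k.
Definition fval n m a b Y (e : edge) : nat :=
  match e with
  | (Some (i,j), Some (i',_)) => if i' == i then Ext n m a b Y j.+1 i.-1
                                 else P (Ext n m a b Y j) i - P (Ext n m a b Y j.+1) i
  | (Some (_,j), None) => P (Ext n m a b Y j) n - P (Ext n m a b Y j.+1) n
  | _ => 0
  end.
Definition flowOf n m a b Y (e : edge) : nat := if e \in edges n m then fval n m a b Y e else 0.
Definition CC n m a b Y := forall k i, k <= m -> i <= n -> P (Ext n m a b Y k.+1) i <= P (Ext n m a b Y k) i.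
Definition chainOfFlow n m (f : edge -> nat) := NZ n m (fun k t => Hf f t.+1 k.-1).

Lemma P0 y : P y 0 = 0. Proof. by rewrite /P big_ord0. Qed.
Lemma PS y i : P y i.+1 = P y i + y i. Proof. by rewrite /P big_ord_recr. Qed.

Lemma P_mono y i i' : i <= i' -> P y i <= P y i'.
Proof.
move=> h; rewrite -(subnKC h); elim: (i' - i) => [|d IH]; first by rewrite addn0.
by rewrite addnS PS; apply: leq_trans IH (leq_addr _ _).
Qed.

Lemma memVerts n m i j : 0 < i <= n -> j <= m -> Some (i,j) \in verts n m.
Proof.
move=> Hi Hj; rewrite /verts in_cons; apply/orP; right.
by apply: (allpairs_f (fun i j => Some (i,j) : vert)); rewrite mem_iota; lia.
Qed.

Lemma NZ_id n m Y : NZ n m (NZ n m Y) = NZ n m Y.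
Proof. by apply: functional_extensionality => k; apply: functional_extensionality => t; rewrite /NZ; case: ifP => [->|]. Qed.

Lemma Ext_NZ n m a b Y : Ext n m a b (NZ n m Y) = Ext n m a b Y.
Proof. by rewrite /Ext NZ_id. Qed.

Lemma flowOf_int n m a b Y : 0 < n -> 0 < m -> CC n m a b Y ->
  is_int_flow n m a b (flowOf n m a b Y).
Proof.
move=> n0 m0 cc; split.
  by move=> e he; rewrite /flowOf (negbTE he).
move=> x /vertsP [->|[i [j [-> [Hi Hj]]]]].
- rewrite netflowN /=.
  have -> : (\sum_(j <- iota 0 m.+1) Posz (flowOf n m a b Y (Some (n, j), None)) =
            \sum_(0 <= j < m.+1) (Posz (P (Ext n m a b Y j) n) - Posz (P (Ext n m a b Y j.+1) n)))%R.
    rewrite /index_iota subn0; apply: eq_big_seq => j.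
    rewrite mem_iota => hj.
    rewrite /flowOf memS /=; last by lia.
    have := cc j n; lia.
  rewrite (eq_bigr (fun j => - (Posz (P (Ext n m a b Y j.+1) n) - Posz (P (Ext n m a b Y j) n))))%R;
    last by move=> j _; rewrite opprB.
  rewrite sumrN telescope_sumr // opprK /Ext /=.
  by rewrite eqxx /psum /P addrC.
- rewrite netflowE // /outF /inF /Vf /Hf /demand.
  set E := Ext n m a b Y.
  have eV : forall i', 0 < i' <= n -> (if i' < n then flowOf n m a b Y (Some (i', j), Some (i'.+1, j))
       else flowOf n m a b Y (Some (n, j), None)) = P (E j) i' - P (E j.+1) i'.
    move=> i' hi'; case: ifP => hin.
      rewrite /flowOf memV /=; last by lia. 2: by lia.
      by have -> : (i'.+1 == i') = false by lia.
    rewrite /flowOf memS //=.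
    by have -> : i' = n by lia.
  rewrite eV //.
  case: i Hi eV => [|i0] // Hi eV.
  have c1 := cc j i0 Hj (ltnW Hi).
  have c2 := cc j i0.+1 Hj Hi.
  rewrite !PS in c2.
  have hA : i0 < n by lia.
  have -> : (if 1 < i0.+1 then (if i0.+1.-1 < n then flowOf n m a b Y (Some (i0.+1.-1, j), Some (i0.+1.-1.+1, j))
       else flowOf n m a b Y (Some (n, j), None)) else 0) = P (E j) i0 - P (E j.+1) i0.
    case: (ltnP 1 i0.+1) => h1; first by rewrite eV /=; lia.
    have -> : i0 = 0 by lia.
    by rewrite !P0.
  have hH1 : j < m -> flowOf n m a b Y (Some (i0.+1, j), Some (i0.+1, j.+1)) = E j.+1 i0.
    by move=> hj; rewrite /flowOf memH //= eqxx.
  have hH2 : 0 < j -> flowOf n m a b Y (Some (i0.+1, j.-1), Some (i0.+1, j.-1.+1)) = E j i0.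
    by move=> hj; rewrite /flowOf memH /= ?eqxx ?prednK //; lia.
  have ea : E 0 i0 = nth 0 a i0 by [].
  have eb : E m.+1 i0 = nth 0 b i0 by rewrite /E /Ext eqxx.
  rewrite !PS in c2 *.
  rewrite -/E in c1 c2.
  case: (eqVneq j 0) => [ej|jn0].
    subst j; rewrite m0 hH1 // /= -ea; lia.
  case: (eqVneq j m) => [ej|jnm].
    subst j; rewrite ltnn hH2; last by lia.
    rewrite m0 /= -eb; lia.
  have jm : j < m by lia.
  rewrite jm hH1 // hH2; last by lia.
  have -> : (0 < j) = true by lia.
  lia.
Qed.

Section FlowSide.
Variables (n m : nat) (a b : seq nat) (f : edge -> nat).
Hypotheses (n0 : 0 < n) (m0 : 0 < m) (hf : is_int_flow n m a b f).
Let E := Ext n m a b (chainOfFlow n m f).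

Lemma Ek k t : 0 < k <= m -> t < n -> E k t = Hf f t.+1 k.-1.
Proof.
move=> hk ht; rewrite /E /Ext /chainOfFlow /NZ.
have -> : (k == 0) = false by lia.
have -> : (k == m.+1) = false by lia.
by rewrite hk ht.
Qed.

Lemma flow_cons i j : 0 < i <= n -> j <= m ->
  E j.+1 i.-1 + Vf n f i j = E j i.-1 + (if 1 < i then Vf n f i.-1 j else 0).
Proof.
move=> Hi Hj.
have := (proj2 hf) (Some (i,j)) (memVerts Hi Hj).
rewrite netflowE // /outF /inF /demand.
case: (eqVneq j 0) => [ej|jn0].
  subst j; rewrite m0 (Ek (k:=1) (t:=i.-1)); [|lia|lia]. rewrite prednK //; last by lia.
  have -> : E 0 i.-1 = nth 0 a i.-1 by [].
  rewrite /=; lia.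
case: (eqVneq j m) => [ej|jnm].
  subst j.
  have -> : E m.+1 i.-1 = (b`_i.-1)%R by rewrite /E /Ext eqxx.
  rewrite ltnn (Ek (k:=m) (t:=i.-1)); [|lia|lia].
  have -> : i.-1.+1 = i by lia.
  rewrite m0; lia.
have jm : j < m by lia.
rewrite jm (Ek (k:=j.+1) (t:=i.-1)) ?(Ek (k:=j) (t:=i.-1)) ?prednK //; try lia.
have -> : (0 < j) = true by lia.
rewrite /=; lia.
Qed.

Lemma flow_P j i : 0 < i <= n -> j <= m -> P (E j.+1) i + Vf n f i j = P (E j) i.
Proof.
move=> + Hj; elim: i => [|i IH] // Hi.
have := flow_cons Hi Hj; rewrite !PS /=.
case: i IH Hi => [|i] IH Hi; first by rewrite !P0 /=; lia.
have h2 : 0 < i.+1 <= n by lia.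
have := IH h2.
have -> : (1 < i.+2) = true by [].
lia.
Qed.

Lemma flow_CC : CC n m a b (chainOfFlow n m f).
Proof.
move=> k i hk hi; case: i hi => [|i] hi; first by rewrite !P0.
have hi' : 0 < i.+1 <= n by lia.
have := flow_P hi' hk; rewrite -/E; lia.
Qed.

Lemma flow_round : flowOf n m a b (chainOfFlow n m f) = f.
Proof.
apply: functional_extensionality => e; rewrite /flowOf.
case: ifP => he; last by rewrite (proj1 hf) // he.
have [[i [j [-> [hi hj]]]]|[[i [j [-> [hi hj]]]]|[j [-> hj]]]] := edgesP n0 he; rewrite /= -/E.
- by rewrite eqxx Ek ?prednK //; lia.
- have -> : (i.+1 == i) = false by lia.
  have hi' : 0 < i <= n by lia.
  have hin : i < n by lia.
  have := flow_P hi' hj; rewrite /Vf hin; lia.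
- have hi' : 0 < n <= n by lia.
  have := flow_P hi' hj; rewrite /Vf ltnn; lia.
Qed.

End FlowSide.

Definition ppOf n m a b Y (r j : nat) : nat :=
  if in_shape n a b r j then count (fun k => j <= P (Ext n m a b Y k) (n.+1 - r)) (iota 1 m) else 0.
Definition nu n a b (p : nat -> nat -> nat) k r :=
  mu n b r + count (fun j => k <= p r j) (iota (mu n b r).+1 (lam n a r - mu n b r)).
Definition chainOfPP n m a b p :=
  NZ n m (fun k t => nu n a b p k (n - t) - nu n a b p k (n.+1 - t)).

Lemma PL (Q : pred nat) l : forall s,
  (forall j j', s <= j' <= j -> j < s + l -> Q j -> Q j') ->
  forall j, s <= j < s + l -> Q j = (j < s + count Q (iota s l)).
Proof.
elim: l => [|l IH] s hQ j hj; first by lia.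
rewrite /= .
case hs: (Q s) => /=.
  case: (eqVneq j s) => [->|js]; first by rewrite hs; lia.
  rewrite (IH s.+1) //.
  - by rewrite addSnnS.
  - by move=> x y hxy hx; apply: hQ; lia.
  - lia.
have h0 : count Q (iota s.+1 l) = 0.
  apply/eqP; rewrite -leqn0 leqNgt -has_count; apply/hasP => [[x]].
  rewrite mem_iota => hx Qx.
  by have := hQ x s ltac:(lia) ltac:(lia) Qx; rewrite hs.
rewrite h0 addn0.
rewrite /= ?addn0. have -> : (j < s) = false by lia.
apply/negbTE/negP => Qj.
by have := hQ j s ltac:(lia) ltac:(lia) Qj; rewrite hs.
Qed.

Lemma cnt_le c s l : s <= c <= s + l -> count (fun j => j <= c) (iota s.+1 l) = c - s.
Proof.
move=> h.
have -> : l = (c - s) + (l - (c - s)) by lia.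
rewrite iotaD count_cat.
rewrite (@eq_in_count _ _ predT); last by move=> x; rewrite mem_iota /=; lia.
rewrite count_predT size_iota.
rewrite (@eq_in_count _ _ pred0); last by move=> x; rewrite mem_iota /=; lia.
by rewrite count_pred0 addn0.
Qed.

Lemma cnt_m c m : c <= m -> count (fun k => k <= c) (iota 1 m) = c.
Proof. by move=> h; rewrite (cnt_le (s := 0)) ?subn0 //; lia. Qed.

Section PPSide.
Variables (n m : nat) (a b : seq nat).
Hypotheses (n0 : 0 < n) (m0 : 0 < m) (hab : forall i, i <= n -> psum b i <= psum a i).

Lemma mu_lam r : 0 < r -> mu n b r <= lam n a r.
Proof. by move=> hr; apply: hab; lia. Qed.

Lemma mu_last : mu n b n.+1 = 0.
Proof. by rewrite /mu subnn /psum big_ord0. Qed.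
Lemma lam_last : lam n a n.+1 = 0.
Proof. by rewrite /lam subnn /psum big_ord0. Qed.

Lemma nu_last p k : nu n a b p k n.+1 = 0.
Proof. by rewrite /nu mu_last lam_last. Qed.

Lemma mu_mono r : mu n b r.+1 <= mu n b r.
Proof. by rewrite /mu; apply: (P_mono (nth 0 b)); lia. Qed.
Lemma lam_mono r : lam n a r.+1 <= lam n a r.
Proof. by rewrite /lam; apply: (P_mono (nth 0 a)); lia. Qed.

Lemma nu_bounds p k r : 0 < r -> mu n b r <= nu n a b p k r <= lam n a r.
Proof.
move=> hr; rewrite /nu; have := mu_lam hr.
have := count_size (fun j => k <= p r j) (iota (mu n b r).+1 (lam n a r - mu n b r)).
rewrite size_iota; lia.
Qed.

Lemma in_shapeE r j : 0 < r <= n -> in_shape n a b r j = (mu n b r < j <= lam n a r).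
Proof. by move=> hr; rewrite /in_shape hr. Qed.

Lemma rowPL p k r j : is_pp n m a b p -> 0 < r <= n -> in_shape n a b r j ->
  (k <= p r j) = (j <= nu n a b p k r).
Proof.
move=> [h1 h2 h3 h4] hr hj.
have ml := mu_lam (r := r) ltac:(lia).
move: (hj); rewrite in_shapeE // => hj'.
rewrite (@PL (fun j => k <= p r j) (lam n a r - mu n b r) (mu n b r).+1) /nu.
- lia.
- move=> x y hxy hx /= hkx; apply: leq_trans hkx _; apply: h3; rewrite ?in_shapeE //; lia.
- lia.
Qed.

Lemma nu_mono p k r : is_pp n m a b p -> 0 < r <= n -> nu n a b p k r.+1 <= nu n a b p k r.
Proof.
move=> pp /andP[hr hrn'].
case: (ltnP r n) => hrn; last first.
  have -> : r = n by lia.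
  by rewrite nu_last.
set c := count (fun j => k <= p r.+1 j) (iota (mu n b r.+1).+1 (lam n a r.+1 - mu n b r.+1)).
have hnu : nu n a b p k r.+1 = mu n b r.+1 + c by [].
have [b1 b2] := andP (nu_bounds p k hr).
have [b3 b4] := andP (nu_bounds p k (ltn0Sn r)).
have mm := mu_mono r.
case: (eqVneq c 0) => [c0|cn0]; first by lia.
set j := mu n b r.+1 + c.
have sj : in_shape n a b r.+1 j by rewrite in_shapeE; lia.
have kj : k <= p r.+1 j by rewrite (rowPL k pp _ sj) //; lia.
case: (leqP j (mu n b r)) => hjm; first by lia.
have sj' : in_shape n a b r j by rewrite in_shapeE //; have := lam_mono r; lia.
have : k <= p r j.
  case: pp => _ _ _ h4; apply: leq_trans kj _; apply: h4 => //.
by rewrite (rowPL k pp _ sj') //; lia.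
Qed.

Lemma P_chainPP p k i : is_pp n m a b p -> 0 < k <= m -> i <= n ->
  P (Ext n m a b (chainOfPP n m a b p) k) i = nu n a b p k (n.+1 - i).
Proof.
move=> pp hk; elim: i => [|i IH] hi; first by rewrite P0 subn0 nu_last.
rewrite PS IH; last by lia.
rewrite /chainOfPP Ext_NZ /Ext /NZ.
have -> : (k == 0) = false by lia.
have -> : (k == m.+1) = false by lia.
rewrite hk /=.
have -> : (i < n) = true by lia.
have := @nu_mono p k (n - i) pp ltac:(lia).
have -> : (n - i).+1 = n.+1 - i by lia.
have -> : n.+1 - i.+1 = n - i by lia.
lia.
Qed.

Lemma lamE i : i <= n -> lam n a (n.+1 - i) = psum a i.
Proof. by move=> hi; rewrite /lam; congr psum; lia. Qed.
Lemma muE i : i <= n -> mu n b (n.+1 - i) = psum b i.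
Proof. by move=> hi; rewrite /mu; congr psum; lia. Qed.

Lemma CC_PP p : is_pp n m a b p -> CC n m a b (chainOfPP n m a b p).
Proof.
move=> pp k i hk hi.
have hr : 0 < n.+1 - i by lia.
case: (eqVneq k 0) => [->|kn0].
  rewrite P_chainPP //; try lia.
  have -> : P (Ext n m a b (chainOfPP n m a b p) 0) i = psum a i by [].
  rewrite -lamE //; have := nu_bounds p 1 hr; lia.
case: (eqVneq k m) => [->|knm].
  have -> : P (Ext n m a b (chainOfPP n m a b p) m.+1) i = psum b i by rewrite /Ext eqxx.
  rewrite P_chainPP //; try lia.
  rewrite -muE //; have := nu_bounds p m hr; lia.
rewrite !P_chainPP //; try lia.
rewrite /nu leq_add2l; apply: sub_count => x /=; lia.
Qed.

Lemma pp_round p : is_pp n m a b p -> ppOf n m a b (chainOfPP n m a b p) = p.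
Proof.
move=> pp; apply: functional_extensionality => r; apply: functional_extensionality => j.
rewrite /ppOf; case: ifP => hs; last by case: pp => h1 _ _ _; rewrite h1 // hs.
have hr : 0 < r <= n by move: hs; rewrite /in_shape => /andP[].
rewrite (@eq_in_count _ _ (fun k => k <= p r j)).
  by apply: cnt_m; case: pp => _ h2 _ _; apply: h2.
move=> k; rewrite mem_iota => hk.
rewrite P_chainPP //; try lia.
have -> : n.+1 - (n.+1 - r) = r by lia.
by rewrite (rowPL k pp hr hs).
Qed.

Lemma ppOf_pp Y : is_pp n m a b (ppOf n m a b Y).
Proof.
split.
- by move=> r j hs; rewrite /ppOf (negbTE hs).
- move=> r j hs; rewrite /ppOf hs.
  by have := count_size (fun k => j <= P (Ext n m a b Y k) (n.+1 - r)) (iota 1 m); rewrite size_iota.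
- move=> r j j' hs hs' hjj; rewrite /ppOf hs hs'.
  apply: sub_count => k /= h; lia.
- move=> r r' j hs hs' hrr; rewrite /ppOf hs hs'.
  apply: sub_count => k /= h; apply: leq_trans h _; apply: P_mono; lia.
Qed.

Lemma Ext_anti Y : CC n m a b Y -> forall k k' i, k <= k' <= m.+1 -> i <= n ->
  P (Ext n m a b Y k') i <= P (Ext n m a b Y k) i.
Proof.
move=> cc k k' i hk hi.
have -> : k' = k + (k' - k) by lia.
have : k + (k' - k) <= m.+1 by lia.
elim: (k' - k) => [|d IH] hd; first by rewrite addn0.
rewrite addnS; apply: leq_trans (IH ltac:(lia)); apply: cc => //; lia.
Qed.

Lemma nu_q Y k r : CC n m a b Y -> 0 < k <= m -> 0 < r <= n.+1 ->
  nu n a b (ppOf n m a b Y) k r = P (Ext n m a b Y k) (n.+1 - r).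
Proof.
move=> cc hk hr.
case: (eqVneq r n.+1) => [->|rn]; first by rewrite nu_last subnn P0.
have hr' : 0 < r <= n by lia.
set i := n.+1 - r.
have hi : i <= n by lia.
set w := fun k' => P (Ext n m a b Y k') i.
have wlo : mu n b r <= w k.
  have := @Ext_anti Y cc k m.+1 i ltac:(lia) hi.
  by have -> : P (Ext n m a b Y m.+1) i = mu n b r by rewrite /Ext eqxx.
have whi : w k <= lam n a r.
  by have := @Ext_anti Y cc 0 k i ltac:(lia) hi.
rewrite /nu (@eq_in_count _ _ (fun j => j <= w k)).
  have ml := mu_lam (r := r) ltac:(lia).
  rewrite cnt_le; first by rewrite /w in wlo whi *; lia.
  rewrite /w in wlo whi *; lia.
move=> j; rewrite mem_iota => hj.
have hs : in_shape n a b r j by rewrite in_shapeE //; lia.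
rewrite /ppOf hs -/i.
rewrite (@PL (fun k' => j <= w k') m 1).
  by rewrite /w add1n ltnS.
- move=> x y hxy hx /= hjx; apply: leq_trans hjx _.
  by apply: (@Ext_anti Y cc y x i) => //; lia.
- lia.
Qed.

Lemma chain_round Y : CC n m a b Y -> chainOfPP n m a b (ppOf n m a b Y) = NZ n m Y.
Proof.
move=> cc; apply: functional_extensionality => k; apply: functional_extensionality => t.
rewrite /chainOfPP /NZ; case: ifP => // /andP[hk ht].
rewrite !nu_q //; try lia.
have -> : n.+1 - (n - t) = t.+1 by lia.
have -> : n.+1 - (n.+1 - t) = t by lia.
rewrite PS addKn /Ext /NZ hk.
have -> : (k == 0) = false by lia.
have -> : (k == m.+1) = false by lia.
by rewrite /= ht.
Qed.

End PPSide.

Lemma flowOf_NZ n m a b Y : flowOf n m a b (NZ n m Y) = flowOf n m a b Y.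
Proof. by apply: functional_extensionality => e; rewrite /flowOf /fval Ext_NZ. Qed.

Lemma ppOf_NZ n m a b Y : ppOf n m a b (NZ n m Y) = ppOf n m a b Y.
Proof. by apply: functional_extensionality => r; apply: functional_extensionality => j; rewrite /ppOf Ext_NZ. Qed.

Lemma chain_flow n m a b Y : chainOfFlow n m (flowOf n m a b Y) = NZ n m Y.
Proof.
apply: functional_extensionality => k; apply: functional_extensionality => t.
rewrite /chainOfFlow /NZ; case: ifP => // /andP[hk ht].
rewrite /Hf /flowOf memH /=; try lia.
rewrite eqxx prednK; last by lia.
rewrite /Ext /NZ hk.
have -> : (k == 0) = false by lia.
have -> : (k == m.+1) = false by lia.
by rewrite /= ht.
Qed.

Lemma sig_eq (A : Type) (Q : A -> Prop) (x y : {a | Q a}) : proj1_sig x = proj1_sig y -> x = y.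
Proof.
case: x => x hx; case: y => y hy /= e; subst y.
by rewrite (proof_irrelevance _ hx hy).
Qed.

Theorem theorem3p7 (n m : nat) (a b : seq nat) :
  0 < n -> 0 < m -> size a = n -> size b = n ->
  (forall i, i <= n -> psum b i <= psum a i) ->
  exists g : PP n m a b -> IntFlow n m a b, bijective g.
Proof.
move=> n0 m0 sa sb hab.
pose g (p : PP n m a b) : IntFlow n m a b :=
  exist _ (flowOf n m a b (chainOfPP n m a b (proj1_sig p)))
    (flowOf_int n0 m0 (CC_PP n0 m0 hab (proj2_sig p))).
pose h (f : IntFlow n m a b) : PP n m a b :=
  exist _ (ppOf n m a b (chainOfFlow n m (proj1_sig f))) (ppOf_pp a b n0 m0 _).
exists g; exists h.
- move=> [p pp]; apply: sig_eq => /=.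
  by rewrite chain_flow ppOf_NZ (pp_round n0 m0 hab pp).
- move=> [f hf]; apply: sig_eq => /=.
  by rewrite (chain_round n0 m0 hab (flow_CC n0 m0 hf)) flowOf_NZ (flow_round n0 m0 hf).
Qed.
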